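(* Let $T$ be a tree with $n\ge 2$ vertices and let $(u,v)$ be an edge of $T$. Then $$\frac{F(T_v)}{F(T_u)}=\frac{|T_u(v)|}{|T_v(u)|}=\frac{|T_u(v)|}{n-|T_u(v)|}.$$
   Context: For a finite undirected graph $G=(V,E)$, a shelling of $G$ is a total ordering $\sigma(1),\ldots,\sigma(|E|)$ of $E$ such that for every $k$ the edges $\sigma(1),\ldots,\sigma(k)$ form a connected subgraph. For a tree $T$ and a vertex $v$, $T_v$ denotes $T$ rooted at $v$, and a shelling of $T_v$ is a shelling $\sigma$ of $T$ whose first edge $\sigma(1)$ is incident to $v$; $F(T_v)$ is the number of shellings of $T_v$. In $T_v$, a vertex $w$ is a descendant of $u$ if $u$ lies on the unique path from $v$ to $w$ (including $w=u$). $T_v(u)$ is the subtree of $T$ induced by all descendants of $u$ in $T_v$, and $|T_v(u)|$ is its number of vertices. *)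

(* Defs.v *)
From mathcomp Require Import all_boot all_order all_algebra.
Set Implicit Arguments. Unset Strict Implicit. Unset Printing Implicit Defensive.

Definition simple_graph (V : finType) (e : rel V) : Prop :=
  symmetric e /\ irreflexive e.

Definition is_tree (V : finType) (e : rel V) : Prop :=
  simple_graph e /\
  (forall x y : V, connect e x y) /\
  (forall p : seq V, ~~ [&& 2 < size p, uniq p & cycle e p]).

Definition edges (V : finType) (e : rel V) : {set {set V}} :=
  [set [set x; y] | x in V, y in V & e x y].

Definition edges_connected (V : finType) (es : seq {set V}) : bool :=
  [forall x : V, forall y : V,
     ((x \in \bigcup_(f <- es) f) && (y \in \bigcup_(f <- es) f)) ==>
     connect (fun a b => [set a; b] \in es) x y].

Definition is_shelling (V : finType) (e : rel V) (s : seq {set V}) : bool :=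
  [&& uniq s, perm_eq s (enum (edges e)) &
      all (fun k => edges_connected (take k s)) (iota 0 (size s).+1)].

(* F(T_v): number of shellings whose first edge is incident to v. *)
Definition Fshell (V : finType) (e : rel V) (v : V) : nat :=
  #|[pred t : (#|edges e|).-tuple {set V} |
      is_shelling e (tval t) && (v \in head set0 (tval t))]|.

(* A path from v to w is a duplicate-free walk v :: p (so size p < #|V|,
   which makes the existential quantifier finite/boolean). *)
Definition descendant (V : finType) (e : rel V) (v u w : V) : bool :=
  [exists k : 'I_#|V|, exists p : k.-tuple V,
     [&& path e v (tval p), last v (tval p) == w, uniq (v :: tval p)
       & u \in v :: tval p]].

Definition subtree_size (V : finType) (e : rel V) (v u : V) : nat :=
  #|[set w | descendant e v u w]|.

(* Main.v *)
Require Import Defs.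
From mathcomp Require Import all_boot all_order all_algebra.
Set Implicit Arguments. Unset Strict Implicit. Unset Printing Implicit Defensive.

Section Cnt.
Variable T : finType.

Fixpoint cnt (n : nat) (R : {set T}) (P : seq T -> bool) : nat :=
  match n with
  | 0 => P [::]
  | n'.+1 => \sum_(f in R) cnt n' (R :\ f) (fun s => P (f :: s))
  end.

Lemma eq_cnt_in n (R : {set T}) (P1 P2 : seq T -> bool) :
  (forall s, all (mem R) s -> P1 s = P2 s) -> cnt n R P1 = cnt n R P2.
Proof.
elim: n R P1 P2 => [|n IH] R P1 P2 H /=; first by rewrite H.
apply: eq_bigr => f fR; apply: IH => s Hs; apply: H => /=; rewrite fR /=.
by apply: sub_all Hs => x /=; rewrite !inE => /andP[].
Qed.

Lemma cnt_false n (R : {set T}) : cnt n R (fun _ => false) = 0.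
Proof. by elim: n R => [|n IH] R //=; rewrite big1. Qed.

Lemma cnt_pos s (R : {set T}) (P : seq T -> bool) : uniq s -> [set x in s] = R -> P s -> 0 < cnt (size s) R P.
Proof.
elim: s R P => [|f s IH] R P; first by move=> _ _ /= ->.
move=> /= /andP[fs us] HR Ps.
have fR : f \in R by rewrite -HR inE mem_head.
rewrite (bigD1 f) //= ltn_addr // IH //.
apply/setP => x; rewrite -HR !inE; case: eqP => [->|] //=.
by rewrite (negPf fs).
Qed.

Lemma card_tupleS n (Q : pred (n.+1.-tuple T)) :
  #|[pred t | Q t]| = \sum_(h : T) #|[pred t : n.-tuple T | Q [tuple of h :: t]]|.
Proof.
rewrite -sum1_card big_mkcond /=.
rewrite (reindex (fun p : T * n.-tuple T => [tuple of p.1 :: p.2])) /=; last first.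
  exists (fun t : (n.+1).-tuple T => (thead t, behead_tuple t)).
    by case=> h t _; congr (_, _); apply: val_inj.
  by move=> t _; apply: val_inj => /=; case: t => [[|x s]] //=.
rewrite -(pair_bigA _ (fun (h : T) (t : n.-tuple T) => if Q [tuple of h :: t] then 1 else 0)).
apply: eq_bigr => h _; rewrite -sum1_card big_mkcond /=.
by rewrite [RHS]big_mkcond; apply: eq_bigr => t _; rewrite inE.
Qed.

Lemma perm_cons_enum (h : T) (t : seq T) (R : {set T}) :
  perm_eq (h :: t) (enum R) = (h \in R) && perm_eq t (enum (R :\ h)).
Proof.
case hR: (h \in R); last first.
  apply/negP => /perm_mem /(_ h); rewrite mem_head mem_enum hR => /esym.
  done.
have : perm_eq (enum R) (h :: enum (R :\ h)).
  apply: uniq_perm; rewrite ?enum_uniq //= ?mem_enum ?inE ?eqxx ?enum_uniq //.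
  move=> x; rewrite !inE !mem_enum !inE; case: eqP => [->|] //.
by move/permPr => ->; rewrite perm_cons.
Qed.

Lemma cnt_card n (R : {set T}) (P : seq T -> bool) : #|R| = n ->
  cnt n R P = #|[pred t : n.-tuple T | perm_eq t (enum R) && P t]|.
Proof.
elim: n R P => [|n IH] R P HR /=.
  have R0 : R = set0 by apply/eqP; rewrite -cards_eq0 HR.
  case HP: (P [::]).
    rewrite (@eq_card _ _ predT) ?card_tuple ?expn0 // => t.
    by rewrite tuple0 !inE /= R0 enum_set0 HP.
  rewrite (@eq_card0 _ [pred t : 0.-tuple T | perm_eq t (enum R) && P t]) // => t.
  by rewrite tuple0 !inE /= HP andbF.
rewrite card_tupleS big_mkcond /=; apply: eq_bigr => h _.
case: ifP => hR.
  rewrite IH; last by rewrite (cardsD1 h R) hR in HR; case: HR.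
  by apply: eq_card => t; rewrite !inE perm_cons_enum hR.
apply/esym/eq_card0 => t; rewrite !inE perm_cons_enum hR //.
Qed.

Lemma sum_cnt (Z : {set T}) (P : seq T -> bool) :
  \sum_(f in Z) cnt (#|Z|.-1) (Z :\ f) (fun s => P (f :: s))
  = if #|Z| == 0 then 0 else cnt #|Z| Z P.
Proof.
have [H0|Hp] := posnP #|Z|.
  have Z0 : Z = set0 by apply/eqP; rewrite -cards_eq0 H0.
  by rewrite Z0 big_set0.
by rewrite -(prednK Hp) /=.
Qed.

Lemma cnt_shuffle (S : pred T) n (R : {set T}) (P Q : seq T -> bool) : #|R| = n ->
  cnt n R (fun s => P (filter S s) && Q (filter (predC S) s)) =
  'C(n, #|[set x in R | S x]|) * cnt #|[set x in R | S x]| [set x in R | S x] P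
    * cnt #|[set x in R | ~~ S x]| [set x in R | ~~ S x] Q.
Proof.
elim: n R P Q => [|n IH] R P Q HR.
  have R0 : R = set0 by apply/eqP; rewrite -cards_eq0 HR.
  have -> : [set x in R | S x] = set0 by apply/setP=> x; rewrite R0 !inE.
  have -> : [set x in R | ~~ S x] = set0 by apply/setP=> x; rewrite R0 !inE.
  by rewrite cards0 /= bin0 mul1n mulnb.
set RS := [set x in R | S x]; set RN := [set x in R | ~~ S x].
have Hk : #|RS| + #|RN| = n.+1.
  rewrite -HR -(cardsID [set x | S x] R); congr (_ + _); apply: eq_card => x;
  by rewrite !inE // andbC.
rewrite /= (bigID S) /=.
have E1 : \sum_(f in R | S f) cnt n (R :\ f)
     (fun s => P [seq x <- f :: s | S x] && Q [seq x <- f :: s | predC S x]) =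
   \sum_(f in RS) 'C(n, #|RS|.-1) * cnt #|RS|.-1 (RS :\ f) (fun s => P (f :: s))
       * cnt #|RN| RN Q.
  apply: eq_big => [f|f /andP[fR Sf]]; first by rewrite !inE.
  rewrite (@eq_cnt_in _ _ _ (fun s => (fun a => P (f :: a)) (filter S s)
        && Q (filter (predC S) s))); last by move=> s _; rewrite /= Sf.
  have fRS : f \in RS by rewrite !inE fR.
  rewrite (IH (R :\ f) (fun a => P (f :: a)) Q); last by rewrite (cardsD1 f R) fR in HR; case: HR.
  have -> : [set x in R :\ f | S x] = RS :\ f by apply/setP => x; rewrite !inE andbA.
  have -> : [set x in R :\ f | ~~ S x] = RN.
    apply/setP => x; rewrite !inE; case: eqP => [->|] //=; by rewrite Sf andbF.
  by rewrite (cardsD1 f RS) fRS.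
have E2 : \sum_(f in R | ~~ S f) cnt n (R :\ f)
     (fun s => P [seq x <- f :: s | S x] && Q [seq x <- f :: s | predC S x]) =
   \sum_(f in RN) 'C(n, #|RS|) * cnt #|RS| RS P *
       cnt #|RN|.-1 (RN :\ f) (fun s => Q (f :: s)).
  apply: eq_big => [f|f /andP[fR Sf]]; first by rewrite !inE.
  rewrite (@eq_cnt_in _ _ _ (fun s => P (filter S s)
        && (fun a => Q (f :: a)) (filter (predC S) s))); last first.
    by move=> s _; rewrite /= (negPf Sf).
  have fRN : f \in RN by rewrite !inE fR.
  rewrite (IH (R :\ f) P (fun a => Q (f :: a))); last by rewrite (cardsD1 f R) fR in HR; case: HR.
  have -> : [set x in R :\ f | ~~ S x] = RN :\ f by apply/setP => x; rewrite !inE andbA.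
  have -> : [set x in R :\ f | S x] = RS.
    apply/setP => x; rewrite !inE; case: eqP => [->|] //=; by rewrite (negPf Sf) andbF.
  by rewrite (cardsD1 f RN) fRN.
rewrite E1 E2 -big_distrl -big_distrr /= -big_distrr /= !sum_cnt.
case: (posnP #|RS|) => [H0|Hp].
  have HN : (#|RN| == 0) = false by move: Hk; rewrite H0 add0n => ->.
  by rewrite H0 HN /= muln0 add0n !bin0.
case: (posnP #|RN|) => [H0'|Hp'].
  rewrite H0' /= muln0 addn0; move: Hk Hp; rewrite H0' addn0 => -> _ /=.
  by rewrite !binn.

move: Hk Hp; case: #|RS| => [|k] //= Hk _.
by rewrite binS !mulnDl addnC.
Qed.

End Cnt.

Section Valid.
Variable V : finType.

Fixpoint valid (W : {set V}) (s : seq {set V}) : bool :=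
  if s is f :: s' then (f :&: W != set0) && valid (W :|: f) s' else true.

Lemma valid_split (S : pred {set V}) (X0 : {set V}) s : forall (WA WB : {set V}),
  X0 \subset WA -> X0 \subset WB ->
  {in s &, forall f g, S f -> ~~ S g -> f :&: g \subset X0} ->
  (forall f, f \in s -> S f -> f :&: WB \subset WA) ->
  (forall f, f \in s -> ~~ S f -> f :&: WA \subset WB) ->
  valid (WA :|: WB) s = valid WA (filter S s) && valid WB (filter (predC S) s).
Proof.
elim: s => [|f s IH] WA WB XA XB Hpair HA HB //=.
have Hpair' : {in s &, forall f g, S f -> ~~ S g -> f :&: g \subset X0}.
  by move=> a b aS bS; apply: Hpair; rewrite inE ?aS ?bS orbT.
case Sf: (S f) => /=.
  have E : f :&: (WA :|: WB) = f :&: WA.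
    apply/setP => x; rewrite !inE; have := subsetP (HA f (mem_head _ _) Sf) x.
    by rewrite !inE; case: (x \in f); case: (x \in WA); case: (x \in WB) => //= ->.
  rewrite E setUAC (IH (WA :|: f) WB) ?andbA //.
  - by apply: subset_trans XA (subsetUl _ _).
  - by move=> g gs Sg; apply: subset_trans (HA g _ Sg) (subsetUl _ _); rewrite inE gs orbT.
  move=> g gs Sg; apply/subsetP => x; rewrite !inE => /andP[xg /orP[xA|xf]].
    by apply: (subsetP (HB g _ Sg)); rewrite ?inE ?gs ?orbT // xg xA.
  apply: (subsetP XB); apply: (subsetP (Hpair f g _ _ Sf Sg)); rewrite ?inE ?eqxx ?gs ?orbT //.
  by rewrite xg xf.
have E : f :&: (WA :|: WB) = f :&: WB.
  apply/setP => x; rewrite !inE; have := subsetP (HB f (mem_head _ _) (negbT Sf)) x.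
  by rewrite !inE; case: (x \in f); case: (x \in WA); case: (x \in WB) => //= ->.
rewrite E -setUA (IH WA (WB :|: f)) ?andbA //.
- by rewrite (andbC (f :&: WB != set0)).
- by apply: subset_trans XB (subsetUl _ _).
- move=> g gs Sg; apply/subsetP => x; rewrite !inE => /andP[xg /orP[xB|xf]].
    by apply: (subsetP (HA g _ Sg)); rewrite ?inE ?gs ?orbT // xg xB.
  apply: (subsetP XA); apply: (subsetP (Hpair g f _ _ Sg (negbT Sf))); rewrite ?inE ?eqxx ?gs ?orbT //.
  by rewrite xg xf.
by move=> g gs Sg; apply: subset_trans (HB g _ Sg) (subsetUl _ _); rewrite inE gs orbT.
Qed.

End Valid.

Section Shell.
Variable V : finType.
Definition pairset (f : {set V}) := exists a b, f = [set a; b].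

Lemma mem_bigcup_seq x (s : seq {set V}) :
  (x \in \bigcup_(f <- s) f) = has (fun f : {set V} => x \in f) s.
Proof. by elim: s => [|f s IH]; rewrite ?big_nil ?big_cons ?inE //= IH. Qed.

Lemma conn_rcons (p : seq {set V}) g : p != [::] -> {in p, forall f, pairset f} ->
  pairset g -> edges_connected p ->
  edges_connected (rcons p g) = (g :&: \bigcup_(f <- p) f != set0).
Proof.
move=> pn0 pP [a [b ->]] /forallP Cp.
apply/idP/idP.
  move=> /forallP C; apply/negP => /eqP H.
  case: p pn0 pP Cp H C => [|f p] // _ pP Cp H C.
  have [c [d fE]] := pP f (mem_head _ _).
  have Hac : (a \in \bigcup_(f <- rcons (f :: p) [set a; b]) f) &&
              (c \in \bigcup_(f <- rcons (f :: p) [set a; b]) f).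
    by rewrite !mem_bigcup_seq !has_rcons /= !inE eqxx /= fE !inE eqxx !orbT.
  have Cac := implyP (forallP (C a) c) Hac.
  have cl : closed (fun x y => [set x; y] \in rcons (f :: p) [set a; b]) [set a; b].
    move=> x y; rewrite mem_rcons inE => /orP[/eqP E|xyp].
      by rewrite -E !inE !eqxx orbT.
    have hx : x \in \bigcup_(h <- f :: p) h.
      by rewrite mem_bigcup_seq; apply/hasP; exists [set x; y]; rewrite ?inE ?eqxx.
    have hy : y \in \bigcup_(h <- f :: p) h.
      by rewrite mem_bigcup_seq; apply/hasP; exists [set x; y]; rewrite ?inE ?eqxx ?orbT.
    have nx : x \notin [set a; b].
      by apply/negP => xab; move/setP: H => /(_ x); rewrite inE xab hx inE.
    have ny : y \notin [set a; b].
      by apply/negP => xab; move/setP: H => /(_ y); rewrite inE xab hy inE.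
    by rewrite (negPf nx) (negPf ny).
  have := closed_connect cl Cac.
  rewrite !inE eqxx /= => /esym /orP [/eqP ca|/eqP cb].
    by move/setP: H => /(_ a); rewrite !inE eqxx /= -ca mem_bigcup_seq /= fE !inE eqxx.
  by move/setP: H => /(_ b); rewrite !inE eqxx orbT /= -cb mem_bigcup_seq /= fE !inE eqxx.
case/set0Pn => z; rewrite inE => /andP [zg zp].
pose r := fun x y => [set x; y] \in rcons p [set a; b].
have csym : connect_sym r.
  by apply: sym_connect_sym => x y; rewrite /r setUC.
have toz : forall x, x \in \bigcup_(f <- rcons p [set a; b]) f -> connect r x z.
  move=> x; rewrite mem_bigcup_seq has_rcons => /orP[xg|xp].
    have [->|xz] := eqVneq x z; first exact: connect0.
    apply: connect1; rewrite /r mem_rcons inE; apply/orP; left; apply/eqP.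
    move: xg zg xz; rewrite !inE => /orP[]/eqP-> /orP[]/eqP->; rewrite ?eqxx //.
    by rewrite setUC.
  have := forallP (Cp x) z; rewrite !mem_bigcup_seq xp /= -mem_bigcup_seq zp /=.
  apply: connect_sub => c d cd; apply: connect1; rewrite /r mem_rcons inE cd orbT.
  done.
apply/forallP => x; apply/forallP => y; apply/implyP => /andP[hx hy].
apply: connect_trans (toz x hx) _; rewrite csym; exact: toz.
Qed.

Lemma conn_single (a b : V) : edges_connected [:: [set a; b]].
Proof.
apply/forallP => x; apply/forallP => y; apply/implyP.
rewrite !mem_bigcup_seq /= !orbF => /andP[hx hy].
have E : forall c d, c \in [set a; b] -> d \in [set a; b] ->
   [set c; d] \in [:: [set a; b]] \/ c = d.
  move=> c d; rewrite !inE => /orP[]/eqP-> /orP[]/eqP->; rewrite ?eqxx; auto.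
  by left; rewrite setUC.
case: (E x y hx hy) => [H|->]; [exact: connect1 | exact: connect0].
Qed.

Lemma valid_rcons (W : {set V}) (s : seq {set V}) (g : {set V}) : valid W (rcons s g) =
  valid W s && (g :&: (W :|: \bigcup_(f <- s) f) != set0).
Proof.
elim: s W => [|f s IH] W /=; first by rewrite big_nil setU0 andbT.
by rewrite IH big_cons setUA andbA.
Qed.

Definition pconn (t : seq {set V}) : bool :=
  all (fun k => @edges_connected V (take k t)) (iota 0 (size t).+1).

Lemma pconn_rcons (t : seq {set V}) (g : {set V}) : pconn (rcons t g) = pconn t && edges_connected (rcons t g).
Proof.
rewrite /pconn size_rcons -(addn1 (size t).+1) iotaD all_cat /= andbT add0n.
rewrite !take0 (take_oversize (n := (size t).+1)) ?size_rcons //.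
have -> : all (fun k => edges_connected (take k (rcons t g))) (iota 1 (size t)) =
   all (fun k => edges_connected (take k t)) (iota 1 (size t)).
  apply: eq_in_all => k; rewrite mem_iota add1n ltnS => /andP[_ kt].
  by rewrite -cats1 takel_cat.
by [].
Qed.

Lemma pconn_valid (v : V) (t : seq {set V}) : t != [::] -> {in t, forall f, pairset f} ->
  pconn t && (v \in head set0 t) = valid [set v] t.
Proof.
elim/last_ind: t => [|t g IH] // _ tP.
have gP : pairset g by apply: tP; rewrite mem_rcons mem_head.
have tP' : {in t, forall f, pairset f} by move=> f ft; apply: tP; rewrite mem_rcons inE ft orbT.
case: (eqVneq t [::]) => [->|tn0] /=.
  have [a [b ->]] := gP.
  rewrite /pconn /= andbT conn_single /= andbT.
  have -> : edges_connected ([::] : seq {set V}).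
    by apply/forallP => x; apply/forallP => y; rewrite mem_bigcup_seq.
  by rewrite setIC setI_eq0 disjoints1 negbK andbT.
rewrite pconn_rcons valid_rcons -IH //.
have -> : head set0 (rcons t g) = head set0 t by case: t tn0 {IH tP tP'}.
case Pt: (pconn t) => //=.
have Ct : edges_connected t.
  move: Pt; rewrite /pconn => /allP /(_ (size t)); rewrite mem_iota ltnSn take_oversize //.
  by move/(_ isT).
rewrite conn_rcons //.
case vh: (v \in head set0 t) => //=.
have -> : [set v] :|: \bigcup_(f <- t) f = \bigcup_(f <- t) f.
  apply/setUidPr; rewrite sub1set mem_bigcup_seq; case: t tn0 {IH tP tP' Pt Ct} vh => //= f t _ ->.
  done.
all: by rewrite ?andbT ?andbF.
Qed.

End Shell.

Section Grow.
Variables (V : finType) (r : rel V).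
Hypothesis rsym : symmetric r.
Hypothesis rirr : irreflexive r.
Hypothesis racyc : forall p : seq V, ~~ [&& 2 < size p, uniq p & cycle r p].

Lemma edgesP f : reflect (exists x y, r x y /\ f = [set x; y]) (f \in edges r).
Proof.
apply: (iffP imset2P).
  by case=> x y _; rewrite inE => /andP[_ rxy] ->; exists x, y.
by case=> x [y [rxy ->]]; apply: (Imset2spec (x1:=x) (x2:=y)); rewrite ?inE.
Qed.

Lemma no_cycle x p : uniq (x :: p) -> path r x p -> r (last x p) x -> 1 < size p -> False.
Proof.
move=> up pp lx sp; have := racyc (x :: p); rewrite /= ltnS sp /=.
by move: up; rewrite /= rcons_path pp lx => ->.
Qed.

Variable u : V.
Definition C := [set w | connect r u w].
Definition rW (W : {set V}) := [rel a b | r a b && (a \in W) && (b \in W)].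

Lemma rW_sym W : symmetric (rW W).
Proof. by move=> a b /=; rewrite rsym andbAC -andbA andbCA andbA. Qed.

Lemma path_rW W a p : path (rW W) a p -> all (mem W) p.
Proof. by elim: p a => //= b p IH a /andP[/andP[_ ->] /IH]. Qed.

Lemma bigcup_rcons (s : seq {set V}) f :
  \bigcup_(g <- rcons s f) g = \bigcup_(g <- s) g :|: f.
Proof. by apply/setP => x; rewrite inE !mem_bigcup_seq has_rcons orbC. Qed.

Lemma grow k : k < #|C| -> exists (W : {set V}) (s : seq {set V}), [/\ W \subset C, u \in W, #|W| = k.+1,
   (forall z, z \in W -> connect (rW W) u z) &
   [/\ uniq s, (forall f, (f \in s) = (f \in edges r) && (f \subset W)),
       valid [set u] s, size s = k & W = u |: \bigcup_(f <- s) f]].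
Proof.
elim: k => [_|k IH Hk].
  exists [set u], [::]; split.
  - by rewrite sub1set inE connect0.
  - by rewrite inE.
  - by rewrite cards1.
  - by move=> z; rewrite inE => /eqP->; apply: connect0.
  split => //; last by rewrite big_nil setU0.
  move=> f; rewrite in_nil; apply/esym/negP => /andP[/edgesP[x [y [rxy ->]]]].
  rewrite subUset !sub1set !inE => /andP[/eqP xu /eqP yu].
  by move: rxy; rewrite xu yu rirr.
have [W [s [WC uW cW Wc [us sE vs ss WE]]]] := IH (ltnW Hk).
have [x xC xW] : exists2 x, x \in C & x \notin W.
  by apply/subsetPn/negP => /subset_leq_card; rewrite cW leqNgt Hk.
have [a [b [aW bW rab]]] : exists a b, [/\ a \in W, b \notin W & r a b].
  case: (boolP [exists a, exists b, [&& a \in W, b \notin W & r a b]]).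
    by move=> /existsP[a /existsP[b /and3P[? ? ?]]]; exists a, b.
  move=> H; exfalso.
  have cl : closed r W.
    move=> c d rcd; case cW': (c \in W); case dW': (d \in W) => //; move/negP: H; case.
      by apply/existsP; exists c; apply/existsP; exists d; rewrite cW' dW' rcd.
    by apply/existsP; exists d; apply/existsP; exists c; rewrite dW' cW' rsym rcd.
  move: xC; rewrite inE => /(closed_connect cl); rewrite uW => /esym.
  by rewrite (negPf xW).
have cs := sym_connect_sym (@rW_sym W).
have unb : forall z, z \in W -> r b z -> z = a.
  move=> z zW rbz; apply/eqP/negP => /negP za.
  have : connect (rW W) a z by apply: connect_trans (Wc z zW); rewrite cs; exact: Wc.
  case/connectP => p pp zl; move: zl rbz za => ->.
  case/shortenP: pp => p' pp' up' _ rbl nl.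
  apply: (@no_cycle b (a :: p')).
  - rewrite (cons_uniq b) up' andbT; move: (path_rW pp') => /allP Ha.
    by apply/negP; rewrite inE => /orP[/eqP ba|/Ha /= bW']; [move: bW; rewrite ba aW | move: bW; rewrite bW'].
  - rewrite /= rsym rab /=; apply: sub_path pp' => c d /andP[/andP[]].
    done.
  - by rewrite /= rsym.
  by case: p' {pp' up' rbl} nl => [|c p'] //=; rewrite eqxx.
have cua : connect r u a by move: (subsetP WC a aW); rewrite inE.
have mono : forall c d, connect (rW W) c d -> connect (rW (b |: W)) c d.
  apply: connect_sub => c d /andP[/andP[rcd cW'] dW']; apply: connect1.
  by rewrite /= rcd !inE cW' dW' !orbT.
exists (b |: W), (rcons s [set a; b]); split.
- rewrite subUset sub1set WC andbT inE.
  by apply: connect_trans cua (connect1 rab).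
- by rewrite !inE uW orbT.
- by rewrite cardsU1 bW cW.
- move=> z; rewrite !inE => /orP[/eqP->|zW]; last exact/mono/Wc.
  apply: connect_trans (mono _ _ (Wc a aW)) (connect1 _).
  by rewrite /= rab !inE aW eqxx !orbT.
split.
- rewrite rcons_uniq us andbT sE negb_and; apply/orP; right.
  by rewrite subUset !sub1set (negPf bW) andbF.
- move=> f; rewrite mem_rcons inE sE.
  case: (eqVneq f [set a; b]) => [->|fn] /=.
    rewrite subUset !sub1set !inE aW eqxx !orbT andbT; apply/esym/edgesP.
    by exists a, b.
  apply/andP/andP => [[fE fW]|[fE fW]].
    by split => //; apply: subset_trans fW (subsetUr _ _).
  split => //; case/edgesP: fE fW fn => x' [y [rxy ->]].
  rewrite subUset !sub1set !inE => /andP[/orP[/eqP x'b|x'W] /orP[/eqP yb|yW]] fn.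
  + by move: rxy; rewrite x'b yb rirr.
  + move: rxy; rewrite x'b => /(unb y yW) ya; by move: fn; rewrite x'b ya (setUC [set b]) eqxx.
  + move: rxy; rewrite yb rsym => /(unb x' x'W) x'a; by move: fn; rewrite x'a yb eqxx.
  + by rewrite subUset !sub1set x'W yW.
- rewrite valid_rcons vs -WE /=; apply/set0Pn; exists a.
  by rewrite !inE eqxx aW.
- by rewrite size_rcons ss.
apply/setP => z; rewrite WE bigcup_rcons !inE.
have : a \in W by [].
rewrite WE !inE => /orP[/eqP au|ab].
  by rewrite au; case: (z == b); case: (z == u); case: (z \in _) => //=; rewrite orbT.
case: (z == b); case: (z == u) => //=; rewrite ?orbT //.
by case: (eqVneq z a) => [->|]; rewrite ?ab ?orbT ?orbF.
Qed.

Lemma grow_full : #|[set f in edges r | f \subset C]|.+1 = #|C| /\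
  0 < cnt #|[set f in edges r | f \subset C]| [set f in edges r | f \subset C] (valid [set u]).
Proof.
have uC : u \in C by rewrite inE connect0.
have Cpos : 0 < #|C| by apply/card_gt0P; exists u.
have Hk : #|C|.-1 < #|C| by rewrite prednK.
have [W [s [WC uW cW Wc [us sE vs ss WE]]]] := grow Hk.
have WCe : W = C.
  apply/setP/subset_cardP => //; by rewrite cW prednK.
have Es : [set f in edges r | f \subset C] = [set f in s].
  by apply/setP => f; rewrite !inE sE WCe.
rewrite Es cardsE (card_uniqP us) ss prednK //; split => //.
by rewrite -ss; apply: cnt_pos.
Qed.

End Grow.

Section Tree.
Variables (V : finType) (e : rel V).
Hypothesis tr : is_tree e.

Let esy : symmetric e. Proof. by case: tr => [[]]. Qed.
Let eirr : irreflexive e. Proof. by case: tr => [[]]. Qed.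
Let econn : forall x y, connect e x y. Proof. by case: tr => _ []. Qed.
Let eacyc : forall p : seq V, ~~ [&& 2 < size p, uniq p & cycle e p].
Proof. by case: tr => _ []. Qed.

Definition rm (x y : V) := [rel a b | e a b && ([set a; b] != [set x; y])].
Definition tcomp (x y : V) := C (rm x y) x.

Lemma rm_sym x y : symmetric (rm x y).
Proof. by move=> a b /=; rewrite esy setUC. Qed.
Lemma rm_irr x y : irreflexive (rm x y).
Proof. by move=> a /=; rewrite eirr. Qed.
Lemma rm_acyc x y : forall p : seq V, ~~ [&& 2 < size p, uniq p & cycle (rm x y) p].
Proof.
move=> p; apply/negP => /and3P[sp up cp]; move/negP: (eacyc p); apply.
by rewrite sp up (sub_cycle _ cp) // => a b /andP[].
Qed.
Lemma rmC x y : rm x y =2 rm y x.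
Proof. by move=> a b /=; rewrite (setUC [set x]). Qed.

Lemma rm_sub x y : subrel (rm x y) e.
Proof. by move=> a b /andP[]. Qed.

Lemma mem_comp x y w : (w \in tcomp x y) = connect (rm x y) x w.
Proof. by rewrite inE. Qed.

Lemma comp_self x y : x \in tcomp x y.
Proof. by rewrite inE connect0. Qed.

Variables u v : V.
Hypothesis euv : e u v.

Lemma notin_comp : v \notin tcomp u v.
Proof.
apply/negP; rewrite inE => /connectP[p pp lp].
case/shortenP: pp lp => p' pp' up' _ lp.
case: p' pp' up' lp => [|a [|b p']].
- by move=> _ _ /= vu; move: euv; rewrite vu eirr.
- by move=> /= /andP[/andP[_ ne] _] _ va; move: ne; rewrite -va eqxx.
move=> pp' up' lp.
apply: (@no_cycle _ e eacyc u [:: a, b & p']) => //.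
- exact: sub_path (@rm_sub u v) _ _ pp'.
by rewrite -lp esy.
Qed.

Lemma comp_disj w : w \in tcomp u v -> w \notin tcomp v u.
Proof.
rewrite !inE => cuw; apply/negP => cvw.
rewrite -(eq_connect (rmC u v)) in cvw.
have cs := sym_connect_sym (@rm_sym u v).
move/negP: notin_comp; apply; rewrite inE.
by apply: connect_trans cuw _; rewrite cs.
Qed.

Lemma comp_cover w : (w \in tcomp u v) || (w \in tcomp v u).
Proof.
have H : forall x y, e x y -> (x \in tcomp u v) || (x \in tcomp v u) ->
   (y \in tcomp u v) || (y \in tcomp v u).
  move=> x y exy; case: (eqVneq [set x; y] [set u; v]) => [E|ne].
    have : y \in [set x; y] by rewrite !inE eqxx orbT.
    rewrite E in_set2 => /orP[]/eqP->; first by rewrite (comp_self u v).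
    by rewrite (comp_self v u) orbT.
  have r1 : rm u v x y by rewrite /= exy ne.
  have r2 : rm v u x y by rewrite /= (setUC [set v]) exy ne.
  rewrite !mem_comp => /orP[cx|cx].
    by rewrite (connect_trans cx (@connect1 _ (rm u v) _ _ r1)).
  by rewrite (connect_trans cx (@connect1 _ (rm v u) _ _ r2)) orbT.
have cl : closed e (tcomp u v :|: tcomp v u).
  move=> x y exy; rewrite !in_setU.
  by apply/idP/idP; apply: H; rewrite // esy.
have := closed_connect cl (econn v w).
by rewrite !in_setU (comp_self v u) orbT => /esym.
Qed.

Lemma edge_class f : f \in edges e ->
  [|| f == [set u; v], f \subset tcomp u v | f \subset tcomp v u].
Proof.
case/edgesP => x [y [exy ->]].
case: (eqVneq [set x; y] [set u; v]) => [->|ne] //=; rewrite ?eqxx //.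
have r1 : rm u v x y by rewrite /= exy ne.
have r2 : rm v u x y by rewrite /= (setUC [set v]) exy ne.
rewrite !subUset !sub1set.
case/orP: (comp_cover x) => cx.
  rewrite cx /= mem_comp (connect_trans _ (@connect1 _ (rm u v) _ _ r1)) //.
  by rewrite -mem_comp.
apply/orP; right.
rewrite cx /= mem_comp (connect_trans _ (@connect1 _ (rm v u) _ _ r2)) //.
by rewrite -mem_comp.
Qed.

Lemma desc_comp w : descendant e v u w = (w \in tcomp u v).
Proof.
have uv : u != v by apply/eqP => uv; move: euv; rewrite uv eirr.
apply/idP/idP.
  case/existsP => k /existsP [p /and4P [pp lw up uin]].
  move: (tval p) pp lw up uin => q pp lw up uin.
  have uq : u \in q by move: uin; rewrite inE (negPf uv).
  move: pp lw up; case/splitPr: uq => p1 p2.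
  rewrite cat_path /= => /andP[_ /andP[_ pp2]].
  rewrite last_cat /= => /eqP lw /andP[vn _].
  have vn2 : v \notin u :: p2.
    by apply: contra vn; rewrite mem_cat => ->; rewrite orbT.
  rewrite mem_comp; apply/connectP; exists p2 => //.
  apply: (@sub_in_path _ (predC1 v)) pp2.
    move=> a b /= av bv eab; rewrite /= eab /=; apply/negP => /eqP E.
    have : v \in [set a; b] by rewrite E !inE eqxx orbT.
    by rewrite !inE (eq_sym v a) (eq_sym v b) (negPf av) (negPf bv).
  by apply/allP => z zin /=; apply: contraNneq vn2 => <-.
rewrite mem_comp => /connectP[p pp lp].
case/shortenP: pp lp => p' pp' up' _ lp.
have vp' : v \notin p'.
  apply/negP => vin; move: pp'; case/splitPr: vin => p1 p2.
  rewrite cat_path /= => /andP[pp1 /andP[rl _]].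
  move/negP: notin_comp; apply; rewrite mem_comp; apply/connectP.
  by exists (rcons p1 v); rewrite ?rcons_path ?pp1 ?rl ?last_rcons.
have uq : uniq [:: v, u & p'] by rewrite (cons_uniq v) up' andbT inE negb_or eq_sym uv.
have Hs : size (u :: p') < #|V|.
  by move: (max_card (mem [:: v, u & p'])); rewrite (card_uniqP uq).
apply/existsP; exists (Ordinal Hs); apply/existsP.
exists (in_tuple (u :: p')); apply/and4P; split => //=.
- by rewrite esy euv; exact: sub_path (@rm_sub u v) _ _ pp'.
- by rewrite lp.
by rewrite !inE eqxx orbT.
Qed.

End Tree.

Section Final.
Variables (V : finType) (e : rel V).
Hypothesis tr : is_tree e.

Let esy : symmetric e. Proof. by case: tr => [[]]. Qed.
Let eirr : irreflexive e. Proof. by case: tr => [[]]. Qed.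

Lemma valid_drop (x : V) (s : seq {set V}) W : (forall f, f \in s -> x \notin f) ->
  valid (x |: W) s = valid W s.
Proof.
elim: s W => [|f s IH] W //= H.
have xf : x \notin f by apply: H; rewrite mem_head.
rewrite -setUA IH; last by move=> g gs; apply: H; rewrite inE gs orbT.
congr (_ && _); congr (~~ _); congr (_ == _).
apply/setP => z; rewrite !inE; case: (eqVneq z x) => [->|] //=.
by rewrite (negPf xf).
Qed.

Lemma Fshell_cnt (x : V) : 0 < #|edges e| ->
  Fshell e x = cnt #|edges e| (edges e) (valid [set x]).
Proof.
move=> m0; rewrite /Fshell cnt_card //; apply: eq_card => t; rewrite !inE /is_shelling.
case Ht: (perm_eq t (enum (edges e))); last by rewrite andbF.
have ut : uniq t by rewrite (perm_uniq Ht) enum_uniq.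
rewrite ut /= -pconn_valid //.
  by apply/eqP => t0; move: (size_tuple t); rewrite t0 /= => m0'; rewrite -m0' in m0.
move=> f ft; have : f \in edges e by rewrite -mem_enum -(perm_mem Ht).
by case/edgesP => a [b [_ ->]]; exists a, b.
Qed.

Definition EA (x y : V) := [set f in edges e | f \subset tcomp e x y].

Variables u v : V.
Hypothesis euv : e u v.
Let evu : e v u. Proof. by rewrite esy. Qed.

Definition Sp (f : {set V}) := (f == [set u; v]) || (f \subset tcomp e u v).

Lemma f0E : [set u; v] \in edges e.
Proof. by apply/edgesP; exists u, v. Qed.

Lemma u_notB : u \notin tcomp e v u.
Proof. exact: (comp_disj tr euv (comp_self e u v)). Qed.

Lemma RS_E : [set f in edges e | Sp f] = [set u; v] |: EA u v.
Proof.
apply/setP => f; rewrite !inE /Sp.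
case: (eqVneq f [set u; v]) => [->|] //=; by rewrite f0E.
Qed.

Lemma RN_E : [set f in edges e | ~~ Sp f] = EA v u.
Proof.
apply/setP => f; rewrite !inE /Sp.
case fE: (f \in edges e) => //=.
apply/idP/idP.
  by move=> /norP[nf nA]; move: (edge_class tr u v fE); rewrite (negPf nf) (negPf nA).
move=> fB; apply/negP => /orP[/eqP f0|fA].
  by move: fB; rewrite f0 subUset !sub1set (negPf u_notB).
case/edgesP: fE fA fB => a [b [_ ->]]; rewrite !subUset !sub1set => /andP[aA _] /andP[aB _].
by move: (comp_disj tr euv aA); rewrite aB.
Qed.

Lemma card_edges : #|edges e| = (#|EA u v| + #|EA v u|).+1.
Proof.
rewrite -RN_E -addSn.
have -> : (#|EA u v|).+1 = #|[set f in edges e | Sp f]|.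
  rewrite RS_E cardsU1 inE negb_and.
  by rewrite subUset !sub1set (negPf (notin_comp tr euv)) andbF orbT.
rewrite -(cardsID [set f | Sp f] (edges e)); congr (_ + _); apply: eq_card => f;
by rewrite !inE // andbC.
Qed.

Lemma F_decomp : Fshell e v = 'C(#|edges e|, #|EA u v|.+1) *
  cnt #|EA u v| (EA u v) (valid [set u]) * cnt #|EA v u| (EA v u) (valid [set v]).
Proof.
rewrite Fshell_cnt; last by rewrite card_edges.
rewrite (@eq_cnt_in _ _ _ _ (fun s => valid [set v] (filter Sp s)
   && valid [set v] (filter (predC Sp) s))); last first.
  move=> s /allP sE; rewrite -{1}(setUid [set v]).
  apply: (valid_split (X0 := [set v])) => //.
  - move=> f g fs gs Sf Sg.
    have gB : g \subset tcomp e v u.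
      have : g \in [set f in edges e | ~~ Sp f] by rewrite inE Sg andbT; exact: sE.
      by rewrite RN_E inE => /andP[].
    apply/subsetP => z /setIP[zf zg]; have zB := subsetP gB z zg.
    case/orP: Sf => [/eqP f0|fA].
      move: zf; rewrite f0 !inE => /orP[/eqP zu|//].
      by move: zB; rewrite zu (negPf u_notB).
    by move: (comp_disj tr euv (subsetP fA z zf)); rewrite zB.
  - by move=> f _ _; rewrite subsetIr.
  - by move=> f _ _; rewrite subsetIr.
rewrite (cnt_shuffle Sp _ _ (erefl _)) RS_E RN_E.
have f0n : [set u; v] \notin EA u v.
  by rewrite inE negb_and subUset !sub1set (negPf (notin_comp tr euv)) andbF orbT.
have vnA : forall f, f \in EA u v -> v \notin f.
  move=> f; rewrite inE => /andP[_ fA]; apply: contra (notin_comp tr euv).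
  exact: (subsetP fA).
have cS : #|[set u; v] |: EA u v| = #|EA u v|.+1 by rewrite cardsU1 f0n.
rewrite cS /= (bigD1 [set u; v]) ?setU11 //= big1 ?addn0.
  rewrite setU1K //; congr (_ * _ * _); apply: eq_cnt_in => s /allP sA.
  have -> : [set u; v] :&: [set v] != set0.
    by apply/set0Pn; exists v; rewrite !inE eqxx orbT.
  have -> : [set v] :|: [set u; v] = v |: [set u].
    by apply/setP => z; rewrite !inE; case: (z == u); case: (z == v).
  by rewrite valid_drop //= => f /sA /vnA.
move=> f /andP[fU fn]; have fA : f \in EA u v.
  by move: fU; rewrite !inE (negPf fn).
rewrite -(cnt_false #|EA u v| (([set u; v] |: EA u v) :\ f)); apply: eq_cnt_in => s _ /=.
have -> : f :&: [set v] = set0.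
  by apply/setP => z; rewrite !inE; case: (eqVneq z v) => [->|]; rewrite ?(negPf (vnA f fA)) ?andbF.
by rewrite eqxx.
Qed.

End Final.
From mathcomp Require Import zify.

Lemma EA_rm (V : finType) (e : rel V) (tr : is_tree e) (x y : V) : e x y ->
  EA e x y = [set f in edges (rm e x y) | f \subset tcomp e x y].
Proof.
move=> exy; apply/setP => f; rewrite !inE.
case fA: (f \subset tcomp e x y); rewrite ?andbF ?andbT //.
apply/idP/idP.
  case/edgesP => a [b [eab fE]]; apply/edgesP; exists a, b; split => //.
  rewrite /= eab /=; apply/negP => /eqP E.
  have : y \in f by rewrite fE E !inE eqxx orbT.
  by move/(subsetP fA); rewrite (negPf (notin_comp tr exy)).
case/edgesP => a [b [rab ->]]; apply/edgesP; exists a, b; split => //.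
by move: rab => /andP[].
Qed.

Lemma side (V : finType) (e : rel V) (tr : is_tree e) (x y : V) : e x y ->
  #|EA e x y|.+1 = #|tcomp e x y| /\ 0 < cnt #|EA e x y| (EA e x y) (valid [set x]).
Proof.
move=> exy; rewrite (EA_rm tr exy).
exact: (grow_full (rm_sym tr x y) (rm_irr tr x y) (rm_acyc tr x y) x).
Qed.

Lemma card_split (V : finType) (e : rel V) (tr : is_tree e) (x y : V) : e x y ->
  #|V| = #|tcomp e x y| + #|tcomp e y x|.
Proof.
move=> exy; rewrite -(cardsC (tcomp e x y)); congr (_ + _); apply: eq_card => w.
rewrite in_setC; have := comp_cover tr x y w.
case: (boolP (w \in tcomp e x y)) => wA /=; last by move=> ->.
by rewrite (negPf (comp_disj tr exy wA)).
Qed.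

Import GRing.Theory Num.Theory.
Local Open Scope ring_scope.

Theorem corollary3p5 (V : finType) (e : rel V) (u v : V) :
  is_tree e -> (2 <= #|V|)%N -> e u v ->
  ((Fshell e v)%:R / (Fshell e u)%:R : rat)
    = (subtree_size e u v)%:R / (subtree_size e v u)%:R
  /\ ((subtree_size e u v)%:R / (subtree_size e v u)%:R : rat)
    = (subtree_size e u v)%:R / (#|V|%:R - (subtree_size e u v)%:R).
Proof.
move=> tr _ euv.
have evu : e v u by case: tr => [[esy _] _]; rewrite esy.
have sA : subtree_size e v u = #|tcomp e u v|.
  by apply: eq_card => w; rewrite inE (desc_comp tr euv).
have sB : subtree_size e u v = #|tcomp e v u|.
  by apply: eq_card => w; rewrite inE (desc_comp tr evu).
have [cA XP] := side tr euv.
have [cB YP] := side tr evu.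
have Fv := F_decomp tr euv.
have Fu := F_decomp tr evu.
have cm := card_edges tr euv.
have nV := card_split tr euv.
rewrite sA sB -cA -cB; split; last first.
  by rewrite nV -cA -cB natrD addrK.
set a := #|EA e u v| in Fv Fu cm XP *.
set b := #|EA e v u| in Fv Fu cm YP *.
set X := cnt a _ _ in Fv Fu XP.
set Y := cnt b _ _ in Fv Fu YP.
set m := #|edges e| in Fv Fu cm.
have Cb : 'C(m, b.+1) = 'C(m, a).
  by rewrite -bin_sub cm ?subSS ?addnK // ltnS leq_addl.
have key : (Fshell e v * a.+1 = Fshell e u * b.+1)%N.
  rewrite Fv Fu Cb -!mulnA mulnC -!mulnA mul_bin_left cm subSn ?leq_addr //.
  by rewrite addKn; nia.
have Fu0 : (0 < Fshell e u)%N.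
  by rewrite Fu !muln_gt0 XP YP bin_gt0 cm ltnS leq_addl.
apply/eqP; rewrite (@eqr_div rat) ?pnatr_eq0 -?lt0n // -!natrM eqr_nat.
by rewrite key mulnC.
Qed.
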